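(* Let $\epsilon\in(0,1)$ and let $P_M=\frac{1}{2M}\sum_{i=1}^N\frac{\sigma_n^2d_i^\alpha}{\sigma_{v,i}^2}$. (a) For every $M\ge1$, $P_D^{(M)}(P_M)\ \ge\ \epsilon^{1/(1+\frac{\sigma_\theta^2}{3}\sum_{i=1}^N\sigma_{v,i}^{-2})}\ >\ \epsilon$. (b) For every $\mathbf{h}\in\mathbb{C}^N$ with all entries nonzero and every $M\ge1$, $\epsilon<P_D^s(P_M;\mathbf{h})\le\epsilon^{1/(1+\zeta_M)}$, where $\zeta_M=\frac{\mathbf{h}^H\mathbf{h}}{2M}\sum_{i=1}^N\frac{\sigma_\theta^2 d_i^\alpha}{\sigma_{v,i}^2}$; in particular, if $\mathbf{h}$ is random with independent entries $h_i\sim\mathcal{CN}(0,d_i^{-\alpha})$, then $\zeta_M\to0$ in probability and $P_D^s(P_M;\mathbf{h})\to\epsilon$ in probability as $M\to\infty$. (c) For every $M\ge1$, every $P>0$ and every $\mathbf{h}$ with all entries nonzero, both $P_D^{(M)}(P)$ and $P_D^s(P;\mathbf{h})$ are at most $\epsilon^{1/(1+\sigma_\theta^2\sum_{i=1}^N\sigma_{v,i}^{-2})}$, are nondecreasing in $P$, and converge to $\epsilon^{1/(1+\sigma_\theta^2\sum_{i=1}^N\sigma_{v,i}^{-2})}$ as $P\to\infty$.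
   Context: Constants: $\sigma_\theta^2,\sigma_n^2>0$, $\sigma_{v,i}^2>0$, $d_i>0$, $\alpha>0$, $i=1,\dots,N$; $\mathbf{V}=\mathrm{diag}\{\sigma_{v,1}^2,\dots,\sigma_{v,N}^2\}$. Multi-antenna (large-$M$) detector: for $x\in[0,\infty)^N$ let $g_M(x)=\sum_{i=1}^N\frac{Mx_i}{\sigma_n^2d_i^\alpha+\sigma_{v,i}^2Mx_i}$ (the almost-sure large-$M$ limit of the NP detection SNR with $|a_i|^2=x_i$), $G_M(P)=\max\{g_M(x):x\ge0,\ \sum_ix_i=P\}$, and $P_D^{(M)}(P)=\epsilon^{1/(1+\sigma_\theta^2G_M(P))}$ (optimal detection probability at false-alarm probability $\epsilon$). Single-antenna detector: with scalar channel gains $\mathbf{h}=[h_1,\dots,h_N]^T$, $\mathbf{F}=\mathrm{diag}\{h_1,\dots,h_N\}$, the received signal is $y=\mathbf{a}^H\mathbf{F}\mathbf{v}+n$ under $\mathcal{H}_0$ and $y=\mathbf{a}^H\mathbf{h}\theta+\mathbf{a}^H\mathbf{F}\mathbf{v}+n$ under $\mathcal{H}_1$, $n\sim\mathcal{CN}(0,\sigma_n^2)$. Its NP detection probability at false-alarm probability $\epsilon$ is $\epsilon^{1/(1+\rho(\mathbf{a}))}$ with $\rho(\mathbf{a})=\frac{\sigma_\theta^2\mathbf{a}^H\mathbf{h}\mathbf{h}^H\mathbf{a}}{\mathbf{a}^H\mathbf{F}\mathbf{V}\mathbf{F}^H\mathbf{a}+\sigma_n^2}$. Define $S(P;\mathbf{h})=\max\{\rho(\mathbf{a}):\mathbf{a}\in\mathbb{C}^N,\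 \mathbf{a}^H\mathbf{a}=P\}$ and $P_D^s(P;\mathbf{h})=\epsilon^{1/(1+S(P;\mathbf{h}))}$. *)

(* Defs.v *)
From Stdlib Require Import Reals Lra Lia ClassicalEpsilon.
Open Scope R_scope.

(* finite sum  sumR n f = f 0 + ... + f (n-1) ; indices i = 0..N-1 stand for 1..N *)
Fixpoint sumR (n : nat) (f : nat -> R) : R :=
  match n with
  | O => 0
  | S k => sumR k f + f k
  end.

(* least upper bound of a set of reals (the paper's "max"; the maxima below are
   attained, so this is the maximum value) *)
Definition supR (S : R -> Prop) : R :=
  epsilon (inhabits 0) (fun v => is_lub S v).

Record cplx := mkC { re : R; im : R }.
Definition norm2 (z : cplx) : R := re z * re z + im z * im z.

(* a^H b = sum_i conj(a_i) b_i  for complex N-vectors a b : nat -> cplx *)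
Definition cinner (N : nat) (a b : nat -> cplx) : cplx :=
  mkC (sumR N (fun i => re (a i) * re (b i) + im (a i) * im (b i)))
      (sumR N (fun i => re (a i) * im (b i) - im (a i) * re (b i))).

Definition PD (eps s : R) : R := Rpower eps (1 / (1 + s)).

(* sv i = sigma_{v,i}^2, sn2 = sigma_n^2, d i = d_i, alpha = alpha *)
Definition gM (N M : nat) (sn2 alpha : R) (sv d : nat -> R) (x : nat -> R) : R :=
  sumR N (fun i => INR M * x i /
                   (sn2 * Rpower (d i) alpha + sv i * INR M * x i)).

Definition GM (N M : nat) (sn2 alpha : R) (sv d : nat -> R) (P : R) : R :=
  supR (fun v => exists x : nat -> R,
          (forall i, (i < N)%nat -> 0 <= x i) /\ sumR N x = P /\
          v = gM N M sn2 alpha sv d x).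

Definition PD_M (N M : nat) (eps sth sn2 alpha : R) (sv d : nat -> R) (P : R) : R :=
  PD eps (sth * GM N M sn2 alpha sv d P).

(* rho(a) = sth * |a^H h|^2 / (a^H F V F^H a + sn2),  F = diag(h), V = diag(sv) *)
Definition rho (N : nat) (sth sn2 : R) (sv : nat -> R) (h a : nat -> cplx) : R :=
  sth * norm2 (cinner N a h) /
  (sumR N (fun i => sv i * norm2 (h i) * norm2 (a i)) + sn2).

Definition Ssingle (N : nat) (sth sn2 : R) (sv : nat -> R) (h : nat -> cplx) (P : R) : R :=
  supR (fun v => exists a : nat -> cplx,
          sumR N (fun i => norm2 (a i)) = P /\ v = rho N sth sn2 sv h a).

Definition PD_s (N : nat) (eps sth sn2 : R) (sv : nat -> R) (h : nat -> cplx) (P : R) : R :=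
  PD eps (Ssingle N sth sn2 sv h P).

Definition P_M (N M : nat) (sn2 alpha : R) (sv d : nat -> R) : R :=
  / (2 * INR M) * sumR N (fun i => sn2 * Rpower (d i) alpha / sv i).

Definition zeta_M (N M : nat) (sth alpha : R) (sv d : nat -> R) (h : nat -> cplx) : R :=
  sumR N (fun i => norm2 (h i)) / (2 * INR M) *
  sumR N (fun i => sth * Rpower (d i) alpha / sv i).

(* Main.v *)
Require Import Defs.
From Stdlib Require Import Reals Lra Lia ClassicalEpsilon.
Open Scope R_scope.


Lemma sumR_ext n f g : (forall i, (i < n)%nat -> f i = g i) -> sumR n f = sumR n g.
Proof. induction n; simpl; intros H; auto. rewrite IHn; [rewrite H; auto|intros; apply H; lia]. Qed.

Lemma sumR_le n f g : (forall i, (i < n)%nat -> f i <= g i) -> sumR n f <= sumR n g.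
Proof. induction n; simpl; intros H; [lra|]. assert (H1 := H n (Nat.lt_succ_diag_r n)).
 assert (sumR n f <= sumR n g) by (apply IHn; intros; apply H; lia). lra. Qed.

Lemma sumR_plus n f g : sumR n (fun i => f i + g i) = sumR n f + sumR n g.
Proof. induction n; simpl; [lra|]. rewrite IHn; ring. Qed.

Lemma sumR_minus n f g : sumR n (fun i => f i - g i) = sumR n f - sumR n g.
Proof. induction n; simpl; [lra|]. rewrite IHn; ring. Qed.

Lemma sumR_scal n c f : sumR n (fun i => c * f i) = c * sumR n f.
Proof. induction n; simpl; [ring|]. rewrite IHn; ring. Qed.

Lemma sumR_const n c : sumR n (fun _ => c) = INR n * c.
Proof. induction n; simpl sumR; [simpl; ring|]. rewrite IHn, S_INR; ring. Qed.

Lemma sumR_nonneg n f : (forall i, (i < n)%nat -> 0 <= f i) -> 0 <= sumR n f.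
Proof. intros H. replace 0 with (sumR n (fun _ => 0)).
  apply sumR_le; auto. rewrite sumR_const; ring. Qed.

Lemma sumR_pos n f : (1 <= n)%nat -> (forall i, (i < n)%nat -> 0 < f i) -> 0 < sumR n f.
Proof. destruct n; [lia|]. intros _ H; simpl.
  assert (0 <= sumR n f) by (apply sumR_nonneg; intros; left; apply H; lia).
  specialize (H n ltac:(lia)). lra. Qed.

Lemma CS n zr zi u v :
  (forall i, (i < n)%nat -> zr i * zr i + zi i * zi i <= u i * v i /\ 0 <= u i /\ 0 <= v i) ->
  sumR n zr * sumR n zr + sumR n zi * sumR n zi <= sumR n u * sumR n v.
Proof.
  induction n; simpl; intros H; [lra|].
  assert (IH := IHn (fun i Hi => H i ltac:(lia))).
  destruct (H n ltac:(lia)) as (Hz & Hu & Hv).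
  assert (HU : 0 <= sumR n u) by (apply sumR_nonneg; intros; apply H; lia).
  assert (HV : 0 <= sumR n v) by (apply sumR_nonneg; intros; apply H; lia).
  set (U := sumR n u) in *. set (V := sumR n v) in *.
  set (A := sumR n zr) in *. set (B := sumR n zi) in *.
  set (a := zr n) in *. set (b := zi n) in *.
  assert (Hsq : (A*a + B*b) * (A*a+B*b) <= (A*A+B*B)*(a*a+b*b)).
  { assert (0 <= (A*b - B*a)*(A*b-B*a)) by apply Rle_0_sqr.
    replace ((A*A+B*B)*(a*a+b*b)) with ((A*a + B*b) * (A*a+B*b) + (A*b - B*a)*(A*b-B*a)) by ring. lra. }
  assert (Hsq2 : (2*(A*a + B*b)) * (2*(A*a+B*b)) <= (U*v n + u n * V) * (U*v n + u n * V)).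
  { assert (0 <= (A*A+B*B)*(a*a+b*b) <= (U*V)*(u n * v n)).
    { split; [nra|]. apply Rmult_le_compat; nra. }
    assert (0 <= (U*v n - u n * V)*(U*v n - u n * V)) by apply Rle_0_sqr.
    replace ((U*v n + u n * V) * (U*v n + u n * V)) with ((U*v n - u n * V)*(U*v n - u n * V) + 4 * ((U*V)*(u n * v n))) by ring.
    replace ((2*(A*a + B*b)) * (2*(A*a+B*b))) with (4 * ((A*a + B*b) * (A*a+B*b))) by ring. lra. }
  assert (0 <= U*v n + u n * V) by nra.
  assert (2*(A*a + B*b) <= U*v n + u n * V).
  { apply Rsqr_incr_0_var; unfold Rsqr; auto. }
  lra.
Qed.


Lemma supR_spec S : bound S -> (exists x, S x) -> is_lub S (supR S).
Proof. intros Hb He. unfold supR. apply epsilon_spec.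
  destruct (completeness S Hb He) as [m Hm]. eauto. Qed.

Lemma supR_ge S b v : (forall x, S x -> x <= b) -> S v -> v <= supR S.
Proof. intros Hb Hv. destruct (supR_spec S) as [H1 _]; eauto. exists b; intros x Hx; auto. Qed.

Lemma supR_le S b : (forall x, S x -> x <= b) -> (exists x, S x) -> supR S <= b.
Proof. intros Hb Hv. destruct (supR_spec S) as [_ H2]; eauto. exists b; intros x Hx; auto. Qed.

Lemma supR_mono S1 S2 b : (forall x, S2 x -> x <= b) -> (exists x, S1 x) ->
  (forall v, S1 v -> exists w, S2 w /\ v <= w) -> supR S1 <= supR S2.
Proof. intros Hb He Hm. apply supR_le with (b := supR S2); auto.
  intros x Hx. destruct (Hm x Hx) as (w & Hw & Hle). apply Rle_trans with w; auto.
  apply supR_ge with b; auto. Qed.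

Section PDs.
Variable eps : R.
Hypothesis Heps : 0 < eps < 1.

Lemma ln_eps_neg : ln eps < 0.
Proof. rewrite <- ln_1. apply ln_increasing; lra. Qed.

Lemma PD_eq s : PD eps s = exp (ln eps / (1 + s)).
Proof. unfold PD, Rpower. f_equal. unfold Rdiv; ring. Qed.

Lemma PD_0 : PD eps 0 = eps.
Proof. rewrite PD_eq. replace (ln eps / (1 + 0)) with (ln eps) by field. apply exp_ln; lra. Qed.

Lemma div_mono s1 s2 : 0 <= s1 <= s2 -> ln eps / (1 + s1) <= ln eps / (1 + s2).
Proof. intros H. assert (Hk := ln_eps_neg). unfold Rdiv.
  assert (/ (1 + s2) <= / (1 + s1)) by (apply Rinv_le_contravar; lra).
  assert (0 < / (1+s2)) by (apply Rinv_0_lt_compat; lra). nra. Qed.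

Lemma PD_mono s1 s2 : 0 <= s1 <= s2 -> PD eps s1 <= PD eps s2.
Proof. intros H. rewrite !PD_eq. destruct (Req_dec (ln eps / (1 + s1)) (ln eps / (1 + s2))) as [E|E].
  rewrite E; lra. left; apply exp_increasing. assert (Hd := div_mono s1 s2 H). lra. Qed.

Lemma PD_gt s : 0 < s -> eps < PD eps s.
Proof. intros H. rewrite PD_eq. pattern eps at 1; rewrite <- (exp_ln eps) by lra.
  apply exp_increasing. assert (Hk := ln_eps_neg).
  apply Rmult_lt_reg_l with (1 + s); [lra|]. field_simplify; [|lra]. nra. Qed.

Lemma PD_lip s1 s2 : 0 <= s1 <= s2 -> PD eps s2 - PD eps s1 <= - ln eps * (s2 - s1).
Proof. intros H. rewrite !PD_eq. assert (Hk := ln_eps_neg).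
  set (a := ln eps / (1 + s1)). set (b := ln eps / (1 + s2)).
  assert (Hab : a <= b) by (apply div_mono; auto).
  assert (Hb : b <= 0). { unfold b, Rdiv. assert (0 < / (1+s2)) by (apply Rinv_0_lt_compat; lra). nra. }
  assert (E : exp a = exp b * exp (a - b)) by (rewrite <- exp_plus; f_equal; ring).
  assert (H1 := exp_ineq1_le (a - b)).
  assert (Heb : 0 < exp b <= 1). { split. apply exp_pos. rewrite <- exp_0. destruct Hb as [Hb|Hb]; [left; apply exp_increasing; auto|rewrite Hb; lra]. }
  assert (exp b - exp a <= b - a) by nra.
  assert (b - a = - ln eps * (s2 - s1) / ((1+s1)*(1+s2))) by (unfold a, b; field; lra).
  assert (- ln eps * (s2 - s1) / ((1+s1)*(1+s2)) <= - ln eps * (s2 - s1)).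
  { unfold Rdiv. assert (0 <= - ln eps * (s2 - s1)) by nra.
    assert (/ ((1+s1)*(1+s2)) <= 1). { rewrite <- Rinv_1. apply Rinv_le_contravar; nra. }
    nra. }
  lra. Qed.

End PDs.


Section Multi.
Variables (N M : nat) (sn2 alpha : R) (sv d : nat -> R).
Hypothesis HN : (1 <= N)%nat.
Hypothesis HM : (1 <= M)%nat.
Hypothesis Hsn2 : 0 < sn2.
Hypothesis Hsv : forall i, (i < N)%nat -> 0 < sv i.

Let mM := INR M.
Lemma mM_ge1 : 1 <= mM.
Proof. unfold mM. apply (le_INR 1); auto. Qed.

Lemma term_eq a s t : 0 < a -> 0 < s -> 0 <= t ->
  mM * t / (a + s * mM * t) = / s - a / (s * (a + s * mM * t)).
Proof. intros. assert (Hm1 := mM_ge1). assert (0 <= s*mM*t) by (apply Rmult_le_pos; nra). field. split; lra. Qed.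

Lemma term_le a s t : 0 < a -> 0 < s -> 0 <= t -> mM * t / (a + s * mM * t) <= / s.
Proof. intros. rewrite term_eq by auto. assert (Hm1 := mM_ge1).
  assert (0 <= s*mM*t) by (apply Rmult_le_pos; nra).
  assert (0 <= a / (s * (a + s * mM * t))).
  { unfold Rdiv. apply Rmult_le_pos; [lra|]. left; apply Rinv_0_lt_compat. apply Rmult_lt_0_compat; lra. } lra. Qed.

Lemma term_mono a s t t' : 0 < a -> 0 < s -> 0 <= t <= t' ->
  mM * t / (a + s * mM * t) <= mM * t' / (a + s * mM * t').
Proof. intros. rewrite !term_eq by (auto; lra). assert (Hm1 := mM_ge1).
  assert (0 <= s*mM*t) by (apply Rmult_le_pos; nra).
  assert (s*mM*t <= s*mM*t') by (apply Rmult_le_compat_l; nra).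
  assert (a / (s * (a + s * mM * t')) <= a / (s * (a + s * mM * t))).
  { unfold Rdiv. apply Rmult_le_compat_l; [lra|]. apply Rinv_le_contravar.
    apply Rmult_lt_0_compat; lra. apply Rmult_le_compat_l; lra. } lra. Qed.

Lemma term_lb a s t : 0 < a -> 0 < s -> 0 < t ->
  / s - a / (s * s * mM * t) <= mM * t / (a + s * mM * t).
Proof. intros. rewrite !term_eq by (auto; lra). assert (Hm1 := mM_ge1).
  assert (a / (s * (a + s * mM * t)) <= a / (s * s * mM * t)).
  { unfold Rdiv. apply Rmult_le_compat_l; [lra|].
    assert (0 < s * mM * t) by (apply Rmult_lt_0_compat; nra).
    replace (s * s * mM * t) with (s * (s * mM * t)) by ring.
    apply Rinv_le_contravar. apply Rmult_lt_0_compat; lra. apply Rmult_le_compat_l; lra. } lra. Qed.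

Let A i := sn2 * Rpower (d i) alpha.
Lemma A_pos i : 0 < A i.
Proof. unfold A, Rpower. apply Rmult_lt_0_compat; auto. apply exp_pos. Qed.

Let S := sumR N (fun i => / sv i).
Let adm P (x : nat -> R) := (forall i, (i < N)%nat -> 0 <= x i) /\ sumR N x = P.

Lemma gM_le x : (forall i, (i < N)%nat -> 0 <= x i) -> gM N M sn2 alpha sv d x <= S.
Proof. intros H. unfold gM, S. apply sumR_le. intros i Hi. apply term_le; auto. apply A_pos. Qed.

Lemma gM_nonneg x : (forall i, (i < N)%nat -> 0 <= x i) -> 0 <= gM N M sn2 alpha sv d x.
Proof. intros H. unfold gM. apply sumR_nonneg. intros i Hi.
  assert (Hm1 := mM_ge1). assert (Ha := A_pos i). assert (Hs := Hsv i Hi). assert (Hx := H i Hi).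
  fold mM. fold (A i). assert (0 <= sv i*mM*x i) by (apply Rmult_le_pos; nra).
  unfold Rdiv. apply Rmult_le_pos; [nra|]. left; apply Rinv_0_lt_compat; lra. Qed.

Definition GMset P := fun v => exists x : nat -> R,
  (forall i, (i < N)%nat -> 0 <= x i) /\ sumR N x = P /\ v = gM N M sn2 alpha sv d x.

Lemma GMset_bound P v : GMset P v -> v <= S.
Proof. intros (x & H1 & _ & ->). apply gM_le; auto. Qed.

Lemma INR_N_pos : 0 < INR N.
Proof. apply (lt_INR 0); lia. Qed.

Lemma const_adm P : 0 <= P -> GMset P (gM N M sn2 alpha sv d (fun _ => P / INR N)).
Proof. intros HP. exists (fun _ => P / INR N). assert (H := INR_N_pos). repeat split.
  intros; unfold Rdiv; apply Rmult_le_pos; [lra|left; apply Rinv_0_lt_compat; lra].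
  rewrite sumR_const. field; lra. Qed.

Lemma GM_ge P x : (forall i, (i < N)%nat -> 0 <= x i) -> sumR N x = P ->
  gM N M sn2 alpha sv d x <= GM N M sn2 alpha sv d P.
Proof. intros. unfold GM. apply supR_ge with S. apply GMset_bound. exists x; auto. Qed.

Lemma GM_le P : 0 <= P -> GM N M sn2 alpha sv d P <= S.
Proof. intros. unfold GM. apply supR_le. apply GMset_bound. eexists; apply const_adm; auto. Qed.

Lemma GM_nonneg P : 0 <= P -> 0 <= GM N M sn2 alpha sv d P.
Proof. intros HP. apply Rle_trans with (gM N M sn2 alpha sv d (fun _ => P / INR N)).
  apply gM_nonneg. intros; assert (HNp := INR_N_pos); unfold Rdiv; apply Rmult_le_pos; [lra|left; apply Rinv_0_lt_compat; lra].
  destruct (const_adm P HP) as (x & H1 & H2 & H3). rewrite H3. apply GM_ge; auto. Qed.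

Lemma GM_mono P1 P2 : 0 <= P1 <= P2 -> GM N M sn2 alpha sv d P1 <= GM N M sn2 alpha sv d P2.
Proof. intros HP. unfold GM. apply supR_mono with S. apply GMset_bound.
  eexists; apply const_adm; lra.
  intros v (x & H1 & H2 & ->). assert (H := INR_N_pos).
  set (dl := (P2 - P1) / INR N).
  assert (Hdl : 0 <= dl) by (unfold dl, Rdiv; apply Rmult_le_pos; [lra|left; apply Rinv_0_lt_compat; lra]).
  exists (gM N M sn2 alpha sv d (fun i => x i + dl)). split.
  - exists (fun i => x i + dl). repeat split; auto.
    intros i Hi; specialize (H1 i Hi); lra.
    rewrite sumR_plus, sumR_const, H2. unfold dl; field; lra.
  - unfold gM. apply sumR_le. intros i Hi. apply term_mono; auto. apply A_pos.
    specialize (H1 i Hi); lra.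
Qed.

Definition Cst := sumR N (fun i => A i * INR N / (sv i * sv i * mM)).

Lemma GM_lb P : 0 < P -> S - Cst / P <= GM N M sn2 alpha sv d P.
Proof. intros HP. assert (H := INR_N_pos). assert (Hm1 := mM_ge1).
  apply Rle_trans with (gM N M sn2 alpha sv d (fun _ => P / INR N)).
  - unfold gM, S, Cst. replace (sumR N (fun i => A i * INR N / (sv i * sv i * mM)) / P)
      with (sumR N (fun i => A i / (sv i * sv i * mM * (P / INR N)))).
    rewrite <- sumR_minus. apply sumR_le. intros i Hi. apply term_lb; auto. apply A_pos.
    unfold Rdiv; apply Rmult_lt_0_compat; [lra|apply Rinv_0_lt_compat; lra].
    unfold Rdiv. rewrite (Rmult_comm (sumR _ _)), <- sumR_scal. apply sumR_ext. intros i Hi.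
    assert (Hs := Hsv i Hi). field. repeat split; lra.
  - destruct (const_adm P ltac:(lra)) as (x & Hx1 & Hx2 & Hx3). rewrite Hx3. apply GM_ge; auto.
Qed.

End Multi.


Section Single.
Variables (N : nat) (sth sn2 : R) (sv : nat -> R) (h : nat -> cplx).
Hypothesis HN : (1 <= N)%nat.
Hypothesis Hsth : 0 < sth.
Hypothesis Hsn2 : 0 < sn2.
Hypothesis Hsv : forall i, (i < N)%nat -> 0 < sv i.
Hypothesis Hh : forall i, (i < N)%nat -> h i <> mkC 0 0.

Lemma norm2_nonneg z : 0 <= norm2 z.
Proof. unfold norm2. nra. Qed.

Lemma nh_pos i : (i < N)%nat -> 0 < norm2 (h i).
Proof. intros Hi. specialize (Hh i Hi). unfold norm2. destruct (h i) as [r m]; simpl.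
  destruct (Req_dec r 0); destruct (Req_dec m 0); subst; try (exfalso; auto; fail); nra. Qed.

Let S := sumR N (fun i => / sv i).
Let H := sumR N (fun i => norm2 (h i)).
Let X (a : nat -> cplx) := sumR N (fun i => sv i * norm2 (h i) * norm2 (a i)).

Lemma S_pos : 0 < S.
Proof. apply sumR_pos; auto. intros; apply Rinv_0_lt_compat; auto. Qed.

Lemma X_nonneg a : 0 <= X a.
Proof. apply sumR_nonneg. intros i Hi. assert (Hs := Hsv i Hi).
  assert (H1 := norm2_nonneg (h i)). assert (H2 := norm2_nonneg (a i)).
  apply Rmult_le_pos; [apply Rmult_le_pos|]; lra. Qed.

Lemma term_id a b : (re a * re b + im a * im b) * (re a * re b + im a * im b) +
  (re a * im b - im a * re b) * (re a * im b - im a * re b) = norm2 a * norm2 b.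
Proof. unfold norm2; ring. Qed.

Lemma cinner_S a : norm2 (cinner N a h) <= S * X a.
Proof. unfold norm2, cinner, S, X; simpl. apply CS. intros i Hi.
  assert (Hs := Hsv i Hi). rewrite term_id. split; [|split].
  right. field. lra. left; apply Rinv_0_lt_compat; auto.
  assert (H1 := norm2_nonneg (h i)). assert (H2 := norm2_nonneg (a i)).
  apply Rmult_le_pos; [apply Rmult_le_pos|]; lra. Qed.

Lemma cinner_P a : norm2 (cinner N a h) <= sumR N (fun i => norm2 (a i)) * H.
Proof. unfold norm2 at 1. unfold cinner, H; simpl. apply CS. intros i Hi.
  rewrite term_id. split; [lra|split; apply norm2_nonneg]. Qed.

Lemma rho_le_S a : rho N sth sn2 sv h a <= sth * S.
Proof. unfold rho. fold (X a). assert (H1 := cinner_S a). assert (H2 := X_nonneg a).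
  assert (H3 := S_pos). assert (H4 := norm2_nonneg (cinner N a h)).
  apply Rmult_le_reg_r with (X a + sn2); [lra|]. unfold Rdiv.
  replace (sth * norm2 (cinner N a h) * / (X a + sn2) * (X a + sn2)) with (sth * norm2 (cinner N a h)) by (field; lra).
  assert (sth * norm2 (cinner N a h) <= sth * (S * X a)) by (apply Rmult_le_compat_l; lra).
  assert (0 <= sth * S * sn2) by (apply Rmult_le_pos; [apply Rmult_le_pos|]; lra).
  lra. Qed.

Lemma rho_le_P a : rho N sth sn2 sv h a <= sth * sumR N (fun i => norm2 (a i)) * H / sn2.
Proof. unfold rho. fold (X a). assert (H1 := cinner_P a). assert (H2 := X_nonneg a).
  assert (H4 := norm2_nonneg (cinner N a h)).
  unfold Rdiv. apply Rle_trans with (sth * norm2 (cinner N a h) * / sn2).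
  apply Rmult_le_compat_l. apply Rmult_le_pos; lra. apply Rinv_le_contravar; lra.
  apply Rmult_le_compat_r; [left; apply Rinv_0_lt_compat; lra|].
  rewrite Rmult_assoc. apply Rmult_le_compat_l; lra. Qed.

Lemma rho_nonneg a : 0 <= rho N sth sn2 sv h a.
Proof. unfold rho. fold (X a). assert (H2 := X_nonneg a).
  assert (H4 := norm2_nonneg (cinner N a h)). unfold Rdiv.
  apply Rmult_le_pos. nra. left; apply Rinv_0_lt_compat; lra. Qed.

Definition Sset P := fun v => exists a : nat -> cplx,
  sumR N (fun i => norm2 (a i)) = P /\ v = rho N sth sn2 sv h a.

Lemma Sset_bound P v : Sset P v -> v <= sth * S.
Proof. intros (a & _ & ->). apply rho_le_S. Qed.

Let B := sumR N (fun i => / (sv i * sv i * norm2 (h i))).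
Lemma B_pos : 0 < B.
Proof. apply sumR_pos; auto. intros i Hi. assert (Hs := Hsv i Hi). assert (Hn := nh_pos i Hi).
  apply Rinv_0_lt_compat. apply Rmult_lt_0_compat; [apply Rmult_lt_0_compat|]; lra. Qed.

Definition aP (P : R) (i : nat) : cplx :=
  mkC (sqrt (P / B) * re (h i) / (sv i * norm2 (h i)))
      (sqrt (P / B) * im (h i) / (sv i * norm2 (h i))).

Lemma aP_val P : 0 <= P -> Sset P (sth * (P / B * S * S) / (P / B * S + sn2)).
Proof. intros HP. assert (HB := B_pos). exists (aP P).
  set (t := sqrt (P / B)).
  assert (Ht : t * t = P / B) by (unfold t; apply sqrt_sqrt; unfold Rdiv;
     apply Rmult_le_pos; [lra|left; apply Rinv_0_lt_compat; lra]).
  assert (Hna : forall i, (i < N)%nat -> norm2 (aP P i) = t * t * / (sv i * sv i * norm2 (h i))).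
  { intros i Hi. assert (Hs := Hsv i Hi). assert (Hn := nh_pos i Hi). unfold aP, norm2 in *; simpl.
    fold t. field. lra. }
  split.
  - rewrite (sumR_ext _ _ _ Hna), sumR_scal. fold B. rewrite Ht. field. lra.
  - unfold rho. 
    assert (Hre : re (cinner N (aP P) h) = t * S).
    { unfold cinner, S; simpl. rewrite <- sumR_scal. apply sumR_ext. intros i Hi.
      assert (Hs := Hsv i Hi). assert (Hn := nh_pos i Hi). unfold aP, norm2 in *; simpl.
      fold t. field. lra. }
    assert (Him : im (cinner N (aP P) h) = 0).
    { unfold cinner; simpl. rewrite <- (Rmult_0_r (INR N)), <- sumR_const. apply sumR_ext. intros i Hi.
      assert (Hs := Hsv i Hi). assert (Hn := nh_pos i Hi). unfold aP, norm2 in *; simpl.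
      fold t. field. lra. }
    assert (HX : sumR N (fun i => sv i * norm2 (h i) * norm2 (aP P i)) = t * t * S).
    { unfold S. rewrite <- sumR_scal. apply sumR_ext. intros i Hi. rewrite Hna by auto.
      assert (Hs := Hsv i Hi). assert (Hn := nh_pos i Hi). field. lra. }
    rewrite HX. unfold norm2 at 1. rewrite Hre, Him. rewrite <- Ht. field.
    assert (0 < S) by apply S_pos. assert (0 <= t * t) by nra. nra.
Qed.

Lemma Ssingle_ge P a : sumR N (fun i => norm2 (a i)) = P -> rho N sth sn2 sv h a <= Ssingle N sth sn2 sv h P.
Proof. intros. unfold Ssingle. apply supR_ge with (sth * S). apply Sset_bound. exists a; auto. Qed.

Lemma Ssingle_le_S P : 0 <= P -> Ssingle N sth sn2 sv h P <= sth * S.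
Proof. intros. unfold Ssingle. apply supR_le. apply Sset_bound. eexists; apply aP_val; auto. Qed.

Lemma Ssingle_le_P P : 0 <= P -> Ssingle N sth sn2 sv h P <= sth * P * H / sn2.
Proof. intros. unfold Ssingle. apply supR_le. intros v (a & Ha & ->). rewrite <- Ha. apply rho_le_P.
  eexists; apply aP_val; auto. Qed.

Lemma Ssingle_lb P : 0 <= P -> sth * (P / B * S * S) / (P / B * S + sn2) <= Ssingle N sth sn2 sv h P.
Proof. intros HP. destruct (aP_val P HP) as (a & Ha & E). rewrite E. apply Ssingle_ge; auto. Qed.

Lemma Ssingle_nonneg P : 0 <= P -> 0 <= Ssingle N sth sn2 sv h P.
Proof. intros HP. destruct (aP_val P HP) as (a & Ha & E). apply Rle_trans with (rho N sth sn2 sv h a).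
  apply rho_nonneg. apply Ssingle_ge; auto. Qed.

Definition scaleC (c : R) (a : nat -> cplx) (i : nat) : cplx := mkC (c * re (a i)) (c * im (a i)).

Lemma rho_scale c a : 1 <= c -> rho N sth sn2 sv h a <= rho N sth sn2 sv h (scaleC c a).
Proof. intros Hc. unfold rho.
  assert (E1 : cinner N (scaleC c a) h = mkC (c * re (cinner N a h)) (c * im (cinner N a h))).
  { unfold cinner; simpl. rewrite <- !sumR_scal. f_equal; apply sumR_ext; intros; unfold scaleC; simpl; ring. }
  assert (E2 : sumR N (fun i => sv i * norm2 (h i) * norm2 (scaleC c a i)) = c * c * X a).
  { unfold X. rewrite <- sumR_scal. apply sumR_ext; intros; unfold scaleC, norm2; simpl; ring. }
  rewrite E1, E2. fold (X a). assert (H2 := X_nonneg a).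
  assert (H4 := norm2_nonneg (cinner N a h)).
  set (Z := norm2 (cinner N a h)) in *.
  replace (norm2 {| re := c * re (cinner N a h); im := c * im (cinner N a h) |}) with (c * c * Z)
    by (unfold Z, norm2; simpl; ring).
  assert (1 <= c * c) by nra.
  apply Rmult_le_reg_r with ((X a + sn2) * (c * c * X a + sn2)). apply Rmult_lt_0_compat; nra.
  replace (sth * Z / (X a + sn2) * ((X a + sn2) * (c * c * X a + sn2))) with (sth * Z * (c * c * X a + sn2)) by (field; lra).
  replace (sth * (c * c * Z) / (c * c * X a + sn2) * ((X a + sn2) * (c * c * X a + sn2))) with (sth * (c * c * Z) * (X a + sn2)) by (field; nra).
  assert (0 <= sth * Z * sn2 * (c * c - 1)).
  { apply Rmult_le_pos; [|lra]. apply Rmult_le_pos; [|lra]. apply Rmult_le_pos; lra. }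
  nra. Qed.

Lemma Ssingle_mono P1 P2 : 0 < P1 <= P2 -> Ssingle N sth sn2 sv h P1 <= Ssingle N sth sn2 sv h P2.
Proof. intros HP. unfold Ssingle. apply supR_mono with (sth * S). apply Sset_bound.
  eexists; apply aP_val; lra.
  intros v (a & Ha & ->). set (c := sqrt (P2 / P1)).
  assert (Hcc : c * c = P2 / P1) by (unfold c; apply sqrt_sqrt; unfold Rdiv;
     apply Rmult_le_pos; [lra|left; apply Rinv_0_lt_compat; lra]).
  assert (Hc0 : 0 <= c) by apply sqrt_pos.
  assert (Hc : 1 <= c). { assert (1 <= P2 / P1). { apply Rmult_le_reg_r with P1; [lra|]. field_simplify; lra. } nra. }
  exists (rho N sth sn2 sv h (scaleC c a)). split; [|apply rho_scale; auto].
  exists (scaleC c a). split; auto.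
  replace P2 with (c * c * P1) by (rewrite Hcc; field; lra).
  rewrite <- Ha, <- sumR_scal. apply sumR_ext; intros; unfold scaleC, norm2; simpl; ring.
Qed.

End Single.


Lemma lb_gap sth sn2 S B P : 0 < sth -> 0 < sn2 -> 0 < S -> 0 < B -> 0 < P ->
  sth * S - sth * (P / B * S * S) / (P / B * S + sn2) <= sth * sn2 * B / P.
Proof. intros. assert (0 < P * S) by (apply Rmult_lt_0_compat; auto).
  assert (0 < sn2 * B) by (apply Rmult_lt_0_compat; auto). replace (sth * S - sth * (P / B * S * S) / (P / B * S + sn2))
   with (sth * sn2 * B * S / (P * S + sn2 * B)) by (field; split; lra).
  unfold Rdiv. rewrite Rmult_assoc. apply Rmult_le_compat_l. nra.
  apply Rmult_le_reg_r with (P * (P * S + sn2 * B)). nra.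
  replace (S * / (P * S + sn2 * B) * (P * (P * S + sn2 * B))) with (S * P) by (field; nra).
  replace (/ P * (P * (P * S + sn2 * B))) with (P * S + sn2 * B) by (field; nra). nra. Qed.

Lemma lb_pos sth sn2 S B P : 0 < sth -> 0 < sn2 -> 0 < S -> 0 < B -> 0 < P ->
  0 < sth * (P / B * S * S) / (P / B * S + sn2).
Proof. intros. assert (0 < P / B) by (apply Rdiv_lt_0_compat; auto).
  assert (0 < P / B * S) by (apply Rmult_lt_0_compat; auto).
  assert (0 < P / B * S * S) by (apply Rmult_lt_0_compat; auto).
  apply Rdiv_lt_0_compat; [|lra]. apply Rmult_lt_0_compat; auto. Qed.

Lemma PD_close eps s s0 dl : 0 < eps < 1 -> 0 <= s <= s0 -> s0 - s <= dl ->
  Rabs (PD eps s - PD eps s0) <= - ln eps * dl.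
Proof. intros He Hs Hd. assert (H1 := PD_mono eps He s s0 Hs). assert (H2 := PD_lip eps He s s0 Hs).
  assert (Hk := ln_eps_neg eps He). rewrite Rabs_left1 by lra.
  assert (- ln eps * (s0 - s) <= - ln eps * dl) by (apply Rmult_le_compat_l; lra). lra. Qed.


Theorem theorem2
  (N : nat) (sth sn2 alpha eps : R) (sv d : nat -> R)
  (HN : (1 <= N)%nat)
  (Hsth : 0 < sth) (Hsn2 : 0 < sn2) (Halpha : 0 < alpha)
  (Hsv : forall i, (i < N)%nat -> 0 < sv i)
  (Hd : forall i, (i < N)%nat -> 0 < d i)
  (Heps : 0 < eps < 1) :
  let L := PD eps (sth * sumR N (fun i => / sv i)) in
  (* (a) *)
  (forall M : nat, (1 <= M)%nat ->
     PD_M N M eps sth sn2 alpha sv d (P_M N M sn2 alpha sv d)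
       >= PD eps (sth / 3 * sumR N (fun i => / sv i))
     /\ PD eps (sth / 3 * sumR N (fun i => / sv i)) > eps)
  /\
  (* (b) *)
  (forall h : nat -> cplx, (forall i, (i < N)%nat -> h i <> mkC 0 0) ->
     (forall M : nat, (1 <= M)%nat ->
        eps < PD_s N eps sth sn2 sv h (P_M N M sn2 alpha sv d)
        /\ PD_s N eps sth sn2 sv h (P_M N M sn2 alpha sv d)
             <= PD eps (zeta_M N M sth alpha sv d h))
     /\ Un_cv (fun k => zeta_M N (S k) sth alpha sv d h) 0
     /\ Un_cv (fun k => PD_s N eps sth sn2 sv h (P_M N (S k) sn2 alpha sv d)) eps)
  /\
  (* (c) *)
  (forall (M : nat) (h : nat -> cplx), (1 <= M)%nat ->
     (forall i, (i < N)%nat -> h i <> mkC 0 0) ->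
     (forall P, 0 < P ->
        PD_M N M eps sth sn2 alpha sv d P <= L /\ PD_s N eps sth sn2 sv h P <= L)
     /\ (forall P1 P2, 0 < P1 -> P1 <= P2 ->
           PD_M N M eps sth sn2 alpha sv d P1 <= PD_M N M eps sth sn2 alpha sv d P2
           /\ PD_s N eps sth sn2 sv h P1 <= PD_s N eps sth sn2 sv h P2)
     /\ (forall e, 0 < e -> exists P0, 0 < P0 /\ forall P, P0 <= P ->
           Rabs (PD_M N M eps sth sn2 alpha sv d P - L) < e
           /\ Rabs (PD_s N eps sth sn2 sv h P - L) < e)).
Proof.
  intros L.
  set (SS := sumR N (fun i => / sv i)) in *.
  assert (HS : 0 < SS) by (apply sumR_pos; auto; intros; apply Rinv_0_lt_compat; auto).
  assert (Hk := ln_eps_neg eps Heps).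
  assert (HA : forall i, 0 < sn2 * Rpower (d i) alpha).
  { intros i. unfold Rpower. apply Rmult_lt_0_compat; auto. apply exp_pos. }
  assert (HPM : forall M, (1 <= M)%nat -> 0 < P_M N M sn2 alpha sv d).
  { intros M HM. unfold P_M. apply Rmult_lt_0_compat.
    apply Rinv_0_lt_compat. assert (1 <= INR M) by (apply (le_INR 1); auto). lra.
    apply sumR_pos; auto. intros i Hi. apply Rdiv_lt_0_compat; auto. }
  split; [|split].
  -
    intros M HM. assert (HMr : 1 <= INR M) by (apply (le_INR 1); auto).
    split.
    + unfold PD_M. apply Rle_ge. apply PD_mono; auto. split.
      { unfold Rdiv. apply Rmult_le_pos; [|lra]. apply Rmult_le_pos; lra. }
      set (x := fun i => / (2 * INR M) * (sn2 * Rpower (d i) alpha / sv i)).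
      assert (Hx : forall i, (i < N)%nat -> 0 <= x i).
      { intros i Hi. unfold x. left. apply Rmult_lt_0_compat.
        apply Rinv_0_lt_compat; lra. apply Rdiv_lt_0_compat; auto. }
      assert (Hg : gM N M sn2 alpha sv d x = / 3 * SS).
      { unfold gM, SS. rewrite <- sumR_scal. apply sumR_ext. intros i Hi.
        specialize (HA i). specialize (Hsv i Hi). unfold x. field. repeat split; lra. }
      assert (/3 * SS <= GM N M sn2 alpha sv d (P_M N M sn2 alpha sv d)).
      { rewrite <- Hg. apply GM_ge; auto. unfold x, P_M. apply sumR_scal. }
      replace (sth / 3 * SS) with (sth * (/3 * SS)) by (unfold Rdiv; ring).
      apply Rmult_le_compat_l; lra.
    + apply Rlt_gt, PD_gt; auto. unfold Rdiv. apply Rmult_lt_0_compat; [|lra]. apply Rmult_lt_0_compat; lra.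
  -
    intros h Hh.
    set (H := sumR N (fun i => norm2 (h i))).
    assert (HH : 0 < H) by (apply sumR_pos; auto; intros; apply nh_pos with (N := N); auto).
    set (B := sumR N (fun i => / (sv i * sv i * norm2 (h i)))).
    assert (HB : 0 < B).
    { apply sumR_pos; auto. intros i Hi. assert (Hs := Hsv i Hi). assert (Hn := nh_pos N h Hh i Hi).
      apply Rinv_0_lt_compat. apply Rmult_lt_0_compat; [apply Rmult_lt_0_compat|]; lra. }
    set (C := sumR N (fun i => sth * Rpower (d i) alpha / sv i)).
    assert (HC : 0 < C).
    { apply sumR_pos; auto. intros i Hi. apply Rdiv_lt_0_compat; auto.
      apply Rmult_lt_0_compat; auto. unfold Rpower; apply exp_pos. }
    assert (Hz : forall M, (1 <= M)%nat -> zeta_M N M sth alpha sv d h = H * C / 2 / INR M).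
    { intros M HM. assert (1 <= INR M) by (apply (le_INR 1); auto). unfold zeta_M. fold H C. field. lra. }
    assert (HzP : forall M, (1 <= M)%nat ->
       sth * P_M N M sn2 alpha sv d * H / sn2 = zeta_M N M sth alpha sv d h).
    { intros M HM. unfold zeta_M, P_M. fold H C.
      replace C with (sth / sn2 * sumR N (fun i => sn2 * Rpower (d i) alpha / sv i)).
      field. assert (1 <= INR M) by (apply (le_INR 1); auto). lra.
      unfold C. rewrite <- sumR_scal. apply sumR_ext. intros i Hi. assert (Hs := Hsv i Hi). field. lra. }
    assert (Hb1 : forall M, (1 <= M)%nat ->
       eps < PD_s N eps sth sn2 sv h (P_M N M sn2 alpha sv d)
       /\ PD_s N eps sth sn2 sv h (P_M N M sn2 alpha sv d) <= PD eps (zeta_M N M sth alpha sv d h)).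
    { intros M HM. assert (HP := HPM M HM). unfold PD_s. split.
      - apply PD_gt; auto. eapply Rlt_le_trans; [|apply Ssingle_lb; auto; lra].
        apply lb_pos; auto.
      - apply PD_mono; auto. split. apply Ssingle_nonneg; auto; lra.
        rewrite <- HzP by auto. apply Ssingle_le_P; auto; lra. }
    assert (Hzb : forall e, 0 < e -> exists n, forall k, (k >= n)%nat ->
               0 <= zeta_M N (S k) sth alpha sv d h < e).
    { intros e He. assert (HK : 0 < H * C / 2) by (apply Rdiv_lt_0_compat; [apply Rmult_lt_0_compat|]; lra).
      destruct (INR_archimed e (H * C / 2) He) as [n Hn]. exists n. intros k Hk'.
      rewrite Hz by lia. assert (Hkn : INR n <= INR (S k)) by (apply le_INR; lia).
      assert (Hk0 : 0 < INR (S k)) by (apply (lt_INR 0); lia).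
      split. left; apply Rdiv_lt_0_compat; auto.
      apply Rmult_lt_reg_r with (INR (S k)); auto. unfold Rdiv at 1. rewrite Rmult_assoc, Rinv_l by lra.
      assert (INR n * e <= INR (S k) * e) by (apply Rmult_le_compat_r; lra). lra. }
    split; [exact Hb1|split].
    + intros e He. destruct (Hzb e He) as [n Hn]. exists n. intros k Hk'.
      unfold R_dist. rewrite Rminus_0_r, Rabs_right by (apply Rle_ge; apply Hn; auto). apply Hn; auto.
    + intros e He. assert (Hke : 0 < e / - ln eps) by (apply Rdiv_lt_0_compat; lra).
      destruct (Hzb _ Hke) as [n Hn]. exists n. intros k Hk'. unfold R_dist.
      destruct (Hb1 (S k) ltac:(lia)) as [Hl Hu]. specialize (Hn k Hk').
      assert (Hlip := PD_lip eps Heps 0 (zeta_M N (S k) sth alpha sv d h) ltac:(lra)).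
      rewrite PD_0 in Hlip by auto. rewrite Rabs_right by lra.
      assert (- ln eps * (zeta_M N (S k) sth alpha sv d h - 0) < - ln eps * (e / - ln eps)).
      { apply Rmult_lt_compat_l; lra. }
      replace (- ln eps * (e / - ln eps)) with e in * by (field; lra). lra.
  -
    intros M h HM Hh.
    set (B := sumR N (fun i => / (sv i * sv i * norm2 (h i)))).
    assert (HB : 0 < B).
    { apply sumR_pos; auto. intros i Hi. assert (Hs := Hsv i Hi). assert (Hn := nh_pos N h Hh i Hi).
      apply Rinv_0_lt_compat. apply Rmult_lt_0_compat; [apply Rmult_lt_0_compat|]; lra. }
    assert (HGs : forall P, 0 <= P -> 0 <= sth * GM N M sn2 alpha sv d P <= sth * SS).
    { intros P HP. split. apply Rmult_le_pos; [lra|apply GM_nonneg; auto].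
      apply Rmult_le_compat_l; [lra|apply GM_le; auto]. }
    assert (HSs : forall P, 0 <= P -> 0 <= Ssingle N sth sn2 sv h P <= sth * SS).
    { intros P HP. split. apply Ssingle_nonneg; auto. apply Ssingle_le_S; auto. }
    split; [|split].
    + intros P HP. unfold PD_M, PD_s, L. split; apply PD_mono; auto.
      apply HGs; lra. apply HSs; lra.
    + intros P1 P2 HP1 HP12. unfold PD_M, PD_s. split; apply PD_mono; auto.
      * split. apply HGs; lra. apply Rmult_le_compat_l; [lra|]. apply GM_mono; auto; lra.
      * split. apply HSs; lra. apply Ssingle_mono; auto.
    + intros e He.
      set (dl := e / (2 * - ln eps)).
      assert (Hdl : 0 < dl) by (apply Rdiv_lt_0_compat; lra).
      assert (Hkdl : - ln eps * dl < e) by (unfold dl; field_simplify; lra).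
      set (Cs := Cst N M sn2 alpha sv d).
      assert (HCs : 0 <= Cs).
      { unfold Cs, Cst. apply sumR_nonneg. intros i Hi. assert (Hs := Hsv i Hi).
        assert (1 <= INR M) by (apply (le_INR 1); auto).
        assert (0 < INR N) by (apply (lt_INR 0); lia). specialize (HA i).
        left. apply Rdiv_lt_0_compat. apply Rmult_lt_0_compat; lra.
        apply Rmult_lt_0_compat; [apply Rmult_lt_0_compat|]; lra. }
      exists (1 + sth * Cs / dl + sth * sn2 * B / dl).
      assert (H1 : 0 <= sth * Cs / dl) by (apply Rmult_le_pos; [apply Rmult_le_pos; lra|left; apply Rinv_0_lt_compat; lra]).
      assert (H2 : 0 <= sth * sn2 * B / dl).
      { apply Rmult_le_pos; [|left; apply Rinv_0_lt_compat; lra]. apply Rmult_le_pos; [apply Rmult_le_pos|]; lra. }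
      split; [lra|]. intros P HP. assert (HP0 : 0 < P) by lra.
      assert (Hc1 : sth * Cs <= dl * P).
      { assert (sth * Cs = dl * (sth * Cs / dl)) by (field; lra).
        assert (dl * (sth * Cs / dl) <= dl * P) by (apply Rmult_le_compat_l; lra). lra. }
      assert (Hc2 : sth * sn2 * B <= dl * P).
      { assert (sth * sn2 * B = dl * (sth * sn2 * B / dl)) by (field; lra).
        assert (dl * (sth * sn2 * B / dl) <= dl * P) by (apply Rmult_le_compat_l; lra). lra. }
      unfold PD_M, PD_s, L. split.
      * eapply Rle_lt_trans; [|exact Hkdl]. apply PD_close; auto. apply HGs; lra.
        assert (Hlb := GM_lb N M sn2 alpha sv d HN HM Hsn2 Hsv P HP0). fold SS Cs in Hlb.
        assert (sth * (SS - Cs / P) <= sth * GM N M sn2 alpha sv d P) by (apply Rmult_le_compat_l; lra).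
        assert (sth * (Cs / P) <= dl).
        { apply Rmult_le_reg_r with P; auto. replace (sth * (Cs / P) * P) with (sth * Cs) by (field; lra). lra. }
        replace (sth * (SS - Cs / P)) with (sth * SS - sth * (Cs / P)) in * by ring. lra.
      * eapply Rle_lt_trans; [|exact Hkdl]. apply PD_close; auto. apply HSs; lra.
        assert (Hlb := Ssingle_lb N sth sn2 sv h HN Hsth Hsn2 Hsv Hh P ltac:(lra)). fold SS B in Hlb.
        assert (Hg := lb_gap sth sn2 SS B P Hsth Hsn2 HS HB HP0).
        assert (sth * sn2 * B / P <= dl).
        { apply Rmult_le_reg_r with P; auto. replace (sth * sn2 * B / P * P) with (sth * sn2 * B) by (field; lra). lra. }
        lra.
Qed.
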